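(* Let $P$ be an integer and $m\ge 0$ an integer. Consider the equation $$\sigma_2(n)-n^2=V_{2m}(P,-1)\,n+U_{2m}(P,-1)^2+1$$ in positive integers $n$. Then every solution $n$ with $n>\big(|V_{2m}(P,-1)|+U_{2m}(P,-1)^2+1\big)^3$ is of one of the following forms (so all solutions not of these forms lie in the finite, computable range $n\le(|V_{2m}(P,-1)|+U_{2m}(P,-1)^2+1)^3$): (1) $n=U_{2k}(P,-1)\,U_{2k+2m}(P,-1)$ for some integer $k\ge 0$, with $U_{2k}(P,-1)$ and $U_{2k+2m}(P,-1)$ both prime; (2) $n=U_{2k}(P,-1)\,U_{2m-2k}(P,-1)$ for some integer $k$ with $0\le k\le m$ and $m\ne 2k$, with $U_{2k}(P,-1)$ and $U_{2m-2k}(P,-1)$ both prime.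
   Context: For a positive integer $n$ and $k\ge 0$, $\sigma_k(n)=\sum_{d\mid n,\ d>0} d^k$. For integers $P,Q$, the Lucas sequences are defined for $j\ge 0$ by $U_0(P,Q)=0$, $U_1(P,Q)=1$, $U_j(P,Q)=P\,U_{j-1}(P,Q)-Q\,U_{j-2}(P,Q)$ for $j>1$, and $V_0(P,Q)=2$, $V_1(P,Q)=P$, $V_j(P,Q)=P\,V_{j-1}(P,Q)-Q\,V_{j-2}(P,Q)$ for $j>1$. *)

(* Defs.v *)
From mathcomp Require Import all_boot all_order all_algebra.
Set Implicit Arguments. Unset Strict Implicit. Unset Printing Implicit Defensive.
Import Order.TTheory GRing.Theory Num.Theory.
Local Open Scope ring_scope.

Definition sigma (k n : nat) : nat := (\sum_(d <- divisors n) d ^ k)%N.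

Fixpoint lucasU_pair (P Q : int) (j : nat) : int * int :=
  match j with
  | 0%N => (0, 1)
  | j'.+1 => let (a, b) := lucasU_pair P Q j' in (b, P * b - Q * a)
  end.
Definition lucasU (P Q : int) (j : nat) : int := (lucasU_pair P Q j).1.

Fixpoint lucasV_pair (P Q : int) (j : nat) : int * int :=
  match j with
  | 0%N => (2, P)
  | j'.+1 => let (a, b) := lucasV_pair P Q j' in (b, P * b - Q * a)
  end.
Definition lucasV (P Q : int) (j : nat) : int := (lucasV_pair P Q j).1.

Definition zprime (z : int) : bool := prime `|z|%N.

(* Main.v *)
Require Import Defs.
From mathcomp Require Import all_boot all_order all_algebra.
From mathcomp Require Import zify ring lra.
Import Order.TTheory GRing.Theory Num.Theory.
Local Open Scope ring_scope.

Notation U P j := (lucasU P (-1) j).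

Lemma U0 P : U P 0 = 0. Proof. by []. Qed.
Lemma U1 P : U P 1 = 1. Proof. by []. Qed.
Lemma U2 P : U P 2 = P. Proof. rewrite /lucasU /=. ring. Qed.
Lemma USS P j : U P j.+2 = P * U P j.+1 + U P j.
Proof.
rewrite /lucasU /=. case: (lucasU_pair P (-1) j) => a b /=. ring.
Qed.

Lemma VU P j : lucasV P (-1) j = 2 * U P j.+1 - P * U P j.
Proof.
suff: lucasV P (-1) j = 2 * U P j.+1 - P * U P j /\
      lucasV P (-1) j.+1 = 2 * U P j.+2 - P * U P j.+1 by case.
elim: j => [|j [IH1 IH2]].
  rewrite USS U0 U1. split; rewrite /lucasV /=; ring.
split => //.
have -> : lucasV P (-1) j.+2 = P * lucasV P (-1) j.+1 + lucasV P (-1) j.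
  rewrite /lucasV /=. case: (lucasV_pair P (-1) j) => a b /=. ring.
rewrite IH1 IH2 !USS. ring.
Qed.

Lemma Uadd P a b : U P (a + b).+1 = U P a.+1 * U P b.+1 + U P a * U P b.
Proof.
suff: U P (a + b).+1 = U P a.+1 * U P b.+1 + U P a * U P b /\
      U P (a + b.+1).+1 = U P a.+1 * U P b.+2 + U P a * U P b.+1 by case.
elim: b => [|b [IH1 IH2]].
  rewrite addn0 addn1 USS U0 U1 U2. split; ring.
split => //.
rewrite addnS in IH2. rewrite !addnS USS IH1 IH2 !(USS P b) !(USS P b.+1).
rewrite (USS P b). ring.
Qed.

Lemma Usum P a b : U P (a + b) = U P a * U P b.+1 + U P a.+1 * U P b - P * U P a * U P b.
Proof.
have h1 := Uadd P a b. have h2 := Uadd P a.+1 b.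
have h3 := USS P (a + b). rewrite addSn in h2.
rewrite (USS P a) in h2.
have -> : U P (a + b) = U P (a+b).+2 - P * U P (a+b).+1 by rewrite h3; ring.
rewrite h2 h1. ring.
Qed.

Lemma cas P j : U P j.+1 ^+ 2 - P * U P j * U P j.+1 - U P j ^+ 2 = (-1) ^+ j.
Proof.
elim: j => [|j IH]; first by rewrite U0 U1 /=; ring.
rewrite (exprS (-1)) -IH USS. ring.
Qed.

Lemma Uge0 P j : 0 <= P -> 0 <= U P j.
Proof.
move=> hP.
suff: 0 <= U P j /\ 0 <= U P j.+1 by case.
elim: j => [|j [IH1 IH2]]; first by rewrite U0 U1.
split => //. rewrite USS. nra.
Qed.

Lemma Uneg P j : U (- P) j = (-1) ^+ j.+1 * U P j.
Proof.
suff: U (- P) j = (-1) ^+ j.+1 * U P j /\ U (-P) j.+1 = (-1) ^+ j.+2 * U P j.+1 by case.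
elim: j => [|j [IH1 IH2]]; first by rewrite !U0 !U1 /=; split; ring.
split => //. rewrite USS IH1 IH2 (USS P j) !exprS. ring.
Qed.

Lemma pell P (hP : 0 < P) (N : nat) : forall s t : int, 0 < s -> 0 <= t -> s + t <= N%:Z ->
  (s ^+ 2 - P * s * t - t ^+ 2 = 1 \/ s ^+ 2 - P * s * t - t ^+ 2 = -1) ->
  exists j, s = U P j.+1 /\ t = U P j.
Proof.
elim: N => [|N IH] s t hs ht hN hphi; first by lia.
have [t0|tpos] := eqVneq t 0.
  exists 0%N; rewrite U0 U1 t0; split => //.
  rewrite t0 in hphi. case: hphi => h; nia.
have tp : 0 < t by lia.
have hsP : P * t <= s.
  rewrite leNgt; apply/negP => hlt.
  case: hphi => h; nia.
have e : t ^+ 2 - P * t * (s - P * t) - (s - P * t) ^+ 2 =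
   - (s ^+ 2 - P * s * t - t ^+ 2) by ring.
have [j [h1 h2]] := IH t (s - P * t) tp ltac:(lia) ltac:(nia)
  ltac:(rewrite e; case: hphi => ->; [right|left]; by rewrite ?opprK).
exists j.+1; split => //.
rewrite USS -h1 -h2. ring.
Qed.

Notation V P j := (lucasV P (-1) j).

Lemma cas_even P m : V P (2 * m) ^+ 2 - (P ^+ 2 + 4) * U P (2 * m) ^+ 2 = 4.
Proof.
have h := cas P (2 * m). rewrite exprM sqrrN !expr1n in h.
have -> : V P (2 * m) ^+ 2 - (P ^+ 2 + 4) * U P (2 * m) ^+ 2 =
  4 * (U P (2 * m).+1 ^+ 2 - P * U P (2 * m) * U P (2 * m).+1 - U P (2 * m) ^+ 2).
  rewrite VU; ring.
by rewrite h mulr1.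
Qed.

Lemma addid P c e : 2 * U P (c + e) = U P c * V P e + U P e * V P c.
Proof. rewrite !VU Usum. ring. Qed.

Lemma subid P c e : V P c * U P (c + e) - U P c * V P (c + e) = 2 * (-1) ^+ c * U P e.
Proof.
have -> : 2 * (-1) ^+ c * U P e = 2 * (U P c.+1 ^+ 2 - P * U P c * U P c.+1 - U P c ^+ 2) * U P e.
  by rewrite cas.
rewrite !VU Uadd Usum. ring. Qed.

Lemma parity (c : int) (y P : int) : c ^+ 2 - 2 * c * P * y = 4 + 4 * y ^+ 2 ->
  exists s, c = 2 * s.
Proof.
move=> h.
have hc := divz_eq c 2.
have h0 : 0 <= (c %% 2)%Z by apply: modz_ge0.
have h1 : (c %% 2)%Z < 2 by apply: ltz_pmod.
set k := (c %/ 2)%Z in hc. set r := (c %% 2)%Z in hc h0 h1.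
have [r0|r1] : r = 0 \/ r = 1 by lia.
  by exists k; rewrite hc r0; ring.
exfalso. rewrite hc r1 in h.
set X := 2 * k ^+ 2 + 2 * k - (k * 2 + 1) * P * y - 2 - 2 * y ^+ 2.
have E : (k * 2 + 1) ^+ 2 - 2 * (k * 2 + 1) * P * y - (4 + 4 * y ^+ 2) = 2 * X + 1.
  rewrite /X; ring.
rewrite h subrr in E. clearbody X. lia.
Qed.

Lemma solve P (hP : 0 < P) m (x y : int) : 0 < x -> 0 < y -> U P (2 *  m) != 0 ->
  x ^+ 2 + y ^+ 2 = V P (2 *  m) * x * y + U P (2 *  m) ^+ 2 ->
  exists k, (y = U P (2 * k) /\ x = U P (2 * k + 2 *  m)) \/ (x = U P (2 * k) /\ y = U P (2 * k + 2 *  m)).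
Proof.
move=> hx hy hu he.
have hD := cas_even P m.
set u := U P (2 *  m) in hu he hD *. set v := V P (2 *  m) in he hD *.
have hsq : (2 * x - v * y)^+2 = u^+2 * (4 + (P^+2+4) * y^+2).
  have E : (2 * x - v * y)^+2 - u^+2 * (4 + (P^+2+4) * y^+2) =
    4*((x ^+ 2 + y ^+ 2) - (v * x * y + u ^+ 2)) + y^+2 * (v ^+ 2 - (P ^+ 2 + 4) * u ^+ 2 - 4) by ring.
  by apply/eqP; rewrite -subr_eq0 E he hD !subrr !mulr0 addr0.
have hdiv : (u %| 2 * x - v * y)%Z.
  rewrite -(dvdz_pexp2r _ _ (isT : (0 < 2)%N)). apply/dvdzP.
  by exists (4 + (P^+2+4) * y^+2); rewrite hsq mulrC.
case/dvdzP: hdiv => w hw.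
have hw2 : w^+2 = 4 + (P^+2+4) * y^+2.
  apply: (mulIf (expf_neq0 2 hu)). by rewrite -exprMn -hw hsq mulrC.
have hn2 : `|w| ^+ 2 = w ^+ 2 by rewrite real_normK ?num_real.
have [s hs] : exists s, `|w| + P * y = 2 * s.
  apply: (@parity _ y P).
  have E : (`|w| + P * y) ^+ 2 - 2 * (`|w| + P * y) * P * y = `|w| ^+ 2 - P ^+ 2 * y ^+ 2 by ring.
  rewrite E hn2 hw2; ring.
have spos : 0 < s.
  have := normr_ge0 w. have : 0 < P * y by apply: mulr_gt0.
  move: hs; set Z := P * y; set W := `|w|; clearbody Z W. lia.
have hphi : s ^+ 2 - P * s * y - y ^+ 2 = 1.
  set X := s ^+ 2 - P * s * y - y ^+ 2.
  have E : 4 * X = (`|w| + P * y) ^+ 2 - 2 * (`|w| + P * y) * P * y - 4 * y ^+ 2 by rewrite hs /X; ring.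
  have E2 : (`|w| + P * y) ^+ 2 - 2 * (`|w| + P * y) * P * y - 4 * y ^+ 2 = `|w| ^+ 2 - P ^+ 2 * y ^+ 2 - 4 * y ^+ 2 by ring.
  have E4 : 4 * X = 4 by rewrite E E2 hn2 hw2; ring.
  clearbody X; lia.
have [j [hj1 hj2]] := @pell P hP (absz (s + y)) s y spos (ltW hy) ltac:(by rewrite abszE ler_norm) (or_introl hphi).
have hc : s ^+ 2 - P * s * y - y ^+ 2 = (-1) ^+ j by rewrite hj1 hj2 -(cas P j); ring.
rewrite hphi -signr_odd in hc.
have oj : ~~ odd j by case: (odd j) hc => //= /eqP; rewrite -subr_eq0 //.
have jE : j = (2 * j./2)%N by rewrite -{1}(odd_double_half j) (negbTE oj) add0n -muln2 mulnC.
set a := j./2 in jE. rewrite jE in hj1 hj2.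
have hwV : `|w| = V P (2 * a).
  rewrite VU -hj1 -hj2. move: hs. clear. set W := `|w|; set Z := P * y; clearbody W Z. lia.
have h2x : 2 * x = v * y + w * u by rewrite -hw; ring.
have [wge|wlt] := lerP 0 w.
  exists a; left; split => //.
  have := addid P (2 * a) (2 * m). rewrite -hwV ger0_norm // -hj2 -/u -/v => e2.
  have : 2 * x = 2 * U P (2 * a + 2 * m) by rewrite h2x e2; ring.
  clear. lia.
have wN : w = - V P (2 * a) by rewrite -hwV ltr0_norm // opprK.
have [mle|alt] := leqP m a.
  set d := (a - m)%N.
  have aE : (2 * a = 2 * m + 2 * d)%N by rewrite /d; clear -mle; lia.
  exists d; right.
  have := subid P (2 * m) (2 * d). rewrite -aE -/u -/v exprM sqrrN !expr1n mulr1 => e2.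
  split; last by rewrite addnC -aE.
  have : 2 * x = 2 * U P (2 * d) by rewrite h2x -e2 wN hj2; ring.
  clear. lia.
exfalso.
set e := (m - a)%N.
have mE : (2 * m = 2 * a + 2 * e)%N by rewrite /e; clear -alt; lia.
have := subid P (2 * a) (2 * e). rewrite -mE -/u -/v exprM sqrrN !expr1n mulr1 => e2.
have : 2 * x = - (2 * U P (2 * e)) by rewrite h2x -e2 wN hj2; ring.
have := Uge0 P (2 * e) (ltW hP). clear -hx. lia.
Qed.
Local Close Scope ring_scope.

Lemma dvd_prime_cases {d p} : prime p -> d %| p -> d = 1 \/ d = p.
Proof.
move=> pp hd; case: (eqVneq d 1) => [->|h]; [by left|right].
exact/(prime_nt_dvdP pp h).
Qed.

Lemma sigma_list n (L : seq nat) : 0 < n -> uniq L ->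
  (forall d, (d %| n) = (d \in L)) -> sigma 2 n = \sum_(d <- L) d ^ 2.
Proof.
move=> n0 uL hL. rewrite /sigma. apply: perm_big. apply: uniq_perm => //.
  exact: divisors_uniq.
by move=> d; rewrite -dvdn_divisors // hL.
Qed.

Lemma sig_p p : prime p -> sigma 2 p = 1 + p ^ 2.
Proof.
move=> pp. have p1 := prime_gt1 pp.
rewrite (@sigma_list p [:: 1; p]) ?big_cons ?big_nil ?addn0 //; first by lia.
  by rewrite /= inE; lia.
move=> d; apply/idP/idP.
  by case/(dvd_prime_cases pp) => ->; rewrite !inE eqxx ?orbT.
by rewrite !inE => /orP[] /eqP ->; rewrite ?dvd1n ?dvdnn.
Qed.

Lemma sig_p2 p : prime p -> sigma 2 (p * p) = 1 + p ^ 2 + (p * p) ^ 2.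
Proof.
move=> pp. have p1 := prime_gt1 pp.
rewrite (@sigma_list (p * p) [:: 1; p; p * p]) ?big_cons ?big_nil ?addn0 ?addnA //; first by nia.
  by rewrite /= !inE; nia.
move=> d; apply/idP/idP.
  rewrite mulnn. case/(dvdn_pfactor _ _ pp) => k hk ->.
  have : k = 0 \/ k = 1 \/ k = 2 by lia.
  by case=> [->|[->|->]]; rewrite !inE ?expn0 ?expn1 ?expnS ?expn1 eqxx ?orbT.
rewrite !inE => /orP[/eqP ->|/orP[] /eqP ->]; [exact: dvd1n|exact: (dvdn_mulr _ (dvdnn p))|exact: dvdnn].
Qed.

Lemma sig_pq p q : prime p -> prime q -> p != q ->
  sigma 2 (p * q) = 1 + p ^ 2 + q ^ 2 + (p * q) ^ 2.
Proof.
move=> pp pq hpq. have p1 := prime_gt1 pp. have q1 := prime_gt1 pq.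
rewrite (@sigma_list (p * q) [:: 1; p; q; p * q]) ?big_cons ?big_nil ?addn0 ?addnA //; first by nia.
  rewrite /= !inE. move: hpq. nia.
move=> d; apply/idP/idP.
  case pd: (p %| d).
    case/dvdnP: pd => e ->. rewrite mulnC dvdn_pmul2l ?prime_gt0 //.
    by case/(dvd_prime_cases pq) => ->; rewrite !inE ?muln1 eqxx ?orbT.
  have cp : coprime d p by rewrite coprime_sym prime_coprime // pd.
  rewrite Gauss_dvdr //.
  by case/(dvd_prime_cases pq) => ->; rewrite !inE eqxx ?orbT.
rewrite !inE => /orP[/eqP ->|/orP[/eqP ->|/orP[] /eqP ->]];
  [exact: dvd1n|exact: (dvdn_mulr _ (dvdnn p))|exact: (dvdn_mull _ (dvdnn q))|exact: dvdnn].
Qed.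

Lemma sigma_lb n r : 0 < n -> r %| n -> 1 < r -> r < n -> n ^ 2 + r ^ 2 + 1 <= sigma 2 n.
Proof.
move=> n0 rn r1 rlt.
have -> : n ^ 2 + r ^ 2 + 1 = \sum_(d <- [:: 1; r; n]) d ^ 2.
  by rewrite !big_cons big_nil; lia.
have -> : \sum_(d <- [:: 1; r; n]) d ^ 2 = \sum_(d <- divisors n | d \in [:: 1; r; n]) d ^ 2.
  rewrite -[in RHS]big_filter. apply: perm_big. apply: uniq_perm.
  - by rewrite /= !inE; lia.
  - by rewrite filter_uniq // divisors_uniq.
  move=> d. rewrite mem_filter -dvdn_divisors //.
  case: (boolP (d \in [:: 1; r; n])) => //= h.
  by symmetry; move: h; rewrite !inE => /orP[/eqP ->|/orP[] /eqP ->]; [exact: dvd1n|exact: rn|exact: dvdnn].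
rewrite /sigma big_mkcond /=. apply: leq_sum => d _. by case: ifP.
Qed.
Local Open Scope ring_scope.

Lemma PoszX (n k : nat) : ((n ^ k)%N)%:Z = (n%:Z) ^+ k.
Proof. elim: k => [|k IH] //. by rewrite expnS exprS PoszM IH. Qed.

Lemma core P m n : 0 <= P -> (0 < n)%N ->
  (sigma 2 n)%:Z - (n ^ 2)%:Z = V P (2 * m) * n%:Z + U P (2 * m) ^+ 2 + 1 ->
  (`|V P (2 * m)| + U P (2 * m) ^+ 2 + 1) ^+ 3 < n%:Z ->
  exists k, n%:Z = U P (2 * k) * U P (2 * k + 2 * m) /\ zprime (U P (2 * k)) /\ zprime (U P (2 * k + 2 * m)).
Proof.
move=> hP n0 heq hbig.
have hD := cas_even P m.
move: heq hbig hD. set u := U P (2 * m). set v := V P (2 * m). move=> heq hbig hD.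
have [C hC] : exists C, C = `|v| + u ^+ 2 + 1 by eexists.
rewrite -hC in hbig.
have hv1 : v <= `|v| := ler_norm v.
have hv2 : - v <= `|v| by rewrite -normrN ler_norm.
have u2 : 0 <= u ^+ 2 := sqr_ge0 u.
have C1 : 1 <= C by rewrite hC; move: u2 (normr_ge0 v); clear; lia.
have CC : C <= C ^+ 3 by move: C1; clear; nia.
have Cn : C < n%:Z by move: CC hbig; clear; lia.
have n1 : (1 < n)%N by move: Cn C1; clear; lia.
set p := pdiv n.
have pp : prime p := pdiv_prime n1.
have p1 := prime_gt1 pp.
set r := (n %/ p)%N.
have nE : n = (p * r)%N by rewrite mulnC divnK // pdiv_dvd.
have rn : (r %| n)%N by rewrite nE dvdn_mull.
have r0 : (0 < r)%N by move: n0; rewrite nE; clear; nia.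
have key : forall (z : nat), (n ^ 2 + z ^ 2 + 1 <= sigma 2 n)%N -> z%:Z ^+ 2 < C * n%:Z.
  move=> z hz.
  have hz' : (n ^ 2 + z ^ 2 + 1)%:Z <= (sigma 2 n)%:Z by [].
  rewrite !PoszD !PoszX in hz'.
  have : z%:Z ^+ 2 <= v * n%:Z + u ^+ 2 by move: heq hz'; rewrite PoszX; clear; lia.
  have : v * n%:Z <= `|v| * n%:Z by apply: ler_wpM2r.
  have : u ^+ 2 <= u ^+ 2 * n%:Z by rewrite ler_peMr //; move: n0; clear; lia.
  rewrite hC. move: n0; clear. nia.
have [r1|r1] := eqVneq r 1%N.
  exfalso.
  have nP : n = p by rewrite nE r1 muln1.
  rewrite nP sig_p // PoszD PoszX in heq.
  have e0 : v * p%:Z + u ^+ 2 = 0 by move: heq; clear; lia.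
  rewrite nP in Cn.
  have [vpos|vneg] := lerP 0 v.
    have [v0|vp] := eqVneq v 0.
      rewrite v0 mul0r add0r in e0. have u0 : u = 0 by apply/eqP; rewrite -sqrf_eq0 e0.
      by move: hD; rewrite v0 u0; clear; lia.
    have : p%:Z <= v * p%:Z by rewrite ler_peMl //; move: vpos vp; clear; lia.
    by move: e0 Cn hC u2 (normr_ge0 v); clear; lia.
  have : - (v * p%:Z) >= p%:Z by rewrite -mulNr ler_peMl //; move: vneg; clear; lia.
  by move: e0 Cn hC u2 (normr_ge0 v); clear; lia.
have r2 : (1 < r)%N by move: r0 r1; clear; lia.
have rltn : (r < n)%N by rewrite nE; move: p1 r0; clear; nia.
have hsr := key r (sigma_lb n r n0 rn r2 rltn).
have [rp|rnp] := boolP (prime r); last first.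
  exfalso.
  have pr2 : (pdiv r ^ 2 <= r)%N.
    rewrite leqNgt; apply/negP => h. by move: rnp; rewrite (ltn_pdiv2_prime r0 h).
  have ppr : (p <= pdiv r)%N.
    apply: pdiv_min_dvd; first exact: prime_gt1 (pdiv_prime r2).
    exact: dvdn_trans (pdiv_dvd r) rn.
  have pr : (p ^ 2 <= r)%N by apply: leq_trans pr2; rewrite leq_exp2r.
  have pr' : p%:Z ^+ 2 <= r%:Z by rewrite -PoszX.
  have nE' : n%:Z = p%:Z * r%:Z by rewrite nE PoszM.
  rewrite nE' in hsr hbig.
  have rC : r%:Z < C * p%:Z.
    have : r%:Z * r%:Z < r%:Z * (C * p%:Z).
      move: hsr. rewrite expr2. set a := r%:Z * r%:Z. have -> : C * (p%:Z * r%:Z) = r%:Z * (C * p%:Z) by ring. done.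
    have r0' : 0 < r%:Z by move: r0; clear; lia.
    by rewrite ltr_pM2l.
  have pC : p%:Z < C.
    have : p%:Z * p%:Z < p%:Z * C.
      rewrite -expr2 mulrC. apply: (le_lt_trans pr' rC).
    have p0' : 0 < p%:Z by move: p1; clear; lia.
    by rewrite ltr_pM2l.
  have : p%:Z * r%:Z < C ^+ 3.
    have p0' : 0 < p%:Z by move: p1; clear; lia.
    have h1 : p%:Z * r%:Z < p%:Z * (C * p%:Z) by rewrite ltr_pM2l.
    have h2 : p%:Z * (C * p%:Z) <= C * C * C.
      have : p%:Z * p%:Z <= C * C.
        apply: ler_pM; move: p1 pC; clear; lia.
      move=> hh. have -> : p%:Z * (C * p%:Z) = C * (p%:Z * p%:Z) by ring.
      rewrite -mulrA. apply: ler_wpM2l => //. move: C1; clear; lia.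
    have : C * C * C = C ^+ 3 by rewrite !exprS expr0 mulr1 mulrA.
    move: h1 h2; clear; lia.
  move: hbig; clear; lia.
have [rp'|rnp'] := eqVneq r p.
  exfalso.
  rewrite nE rp' sig_p2 // !PoszD !PoszX !PoszM in heq.
  have e0 : p%:Z ^+ 2 = v * (p%:Z * p%:Z) + u ^+ 2.
    move: heq. set a := p%:Z ^+ 2. set b := (p%:Z * p%:Z). have -> : b = a by rewrite /a /b expr2.
    clear. lia.
  have nE' : n%:Z = p%:Z ^+ 2 by rewrite nE rp' PoszM expr2.
  rewrite nE' in Cn.
  rewrite -expr2 in e0.
  move: e0 Cn hD hC u2 (normr_ge0 v). set a := p%:Z ^+ 2. have a0 : 0 < a by rewrite /a exprn_gt0 //; move: p1; clear; lia.
  move: a0. clear. move=> a0 e0 Cn hD hC u2 nv.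
  have [v1|v1] := eqVneq v 1.
    rewrite v1 mul1r in e0. have u0 : u ^+ 2 = 0 by move: e0; clear; lia.
    have : u = 0 by apply/eqP; rewrite -sqrf_eq0 u0.
    move=> u0'. move: hD. rewrite v1 u0'. clear. lia.
  have [vle|vge] := lerP v 0.
    have : v * a <= 0 by rewrite mulr_le0_ge0 // ltW.
    lia.
  have : 2 * a <= v * a by apply: ler_wpM2r; [apply: ltW | move: vge v1; clear; lia].
  lia.
have plr : (p < r)%N.
  have : (p <= r)%N by apply: pdiv_min_dvd.
  by move: rnp'; clear; lia.
rewrite nE sig_pq // 1?eq_sym // !PoszD !PoszX !PoszM in heq.
have e0 : p%:Z ^+ 2 + r%:Z ^+ 2 = v * p%:Z * r%:Z + u ^+ 2.
  move: heq. rewrite exprMn -mulrA. set a := p%:Z ^+ 2 * r%:Z ^+ 2. clear. lia.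
have hu : u != 0.
  apply/negP => /eqP u0. rewrite u0 expr0n /= mulr0 subr0 in hD.
  rewrite u0 expr0n /= addr0 in e0.
  have : (v - 2) * (v + 2) = 0 by rewrite -[RHS](subrr 4) -{1}hD; ring.
  move/eqP; rewrite mulf_eq0 => /orP[] /eqP hv.
    have v2 : v = 2 by move: hv; clear; lia.
    have : (p%:Z - r%:Z) ^+ 2 = 0 by rewrite -[RHS](subrr (v * p%:Z * r%:Z)) -{1}e0 v2; ring.
    move/eqP; rewrite expf_eq0 /= subr_eq0 => /eqP. move: plr; clear; lia.
  have v2 : v = -2 by move: hv; clear; lia.
  have : (p%:Z + r%:Z) ^+ 2 = 0 by rewrite -[RHS](subrr (v * p%:Z * r%:Z)) -{1}e0 v2; ring.
  move/eqP; rewrite expf_eq0 /=. move: p1; clear; lia.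
have Ppos : 0 < P.
  rewrite lt_def hP andbT; apply/eqP => P0.
  move: hu; rewrite /u P0.
  have := Uneg 0 (2 * m). rewrite oppr0 exprS exprM sqrrN !expr1n mulr1 => h.
  apply/negP; rewrite negbK; apply/eqP. move: h; clear. set w := U 0 (2 * m). move=> h. lia.
have he' : r%:Z ^+ 2 + p%:Z ^+ 2 = v * r%:Z * p%:Z + u ^+ 2 by rewrite addrC e0; ring.
have [k hk] := solve P Ppos m r%:Z p%:Z ltac:(move: r0; clear; lia) ltac:(move: p1; clear; lia) hu he'.
exists k.
case: hk => [[hy hx]|[hx hy]]; rewrite -hx -hy /zprime !absz_nat nE PoszM.
  by split; [|split].
by split; [rewrite mulrC|split].
Qed.

Lemma even_neg P k : U P (2 * k) = - U (-P) (2 * k).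
Proof. rewrite Uneg exprS exprM sqrrN !expr1n. ring. Qed.

Lemma odd_neg P k : U P (2 * k).+1 = U (-P) (2 * k).+1.
Proof. rewrite Uneg exprS exprS exprM sqrrN !expr1n. ring. Qed.

Lemma V_neg P m : V P (2 * m) = V (-P) (2 * m).
Proof. rewrite !VU odd_neg even_neg. ring. Qed.

Theorem theorem1p4 (P : int) (m n : nat) :
  (0 < n)%N ->
  (sigma 2 n)%:Z - (n ^ 2)%:Z
    = lucasV P (-1) (2 * m) * n%:Z + (lucasU P (-1) (2 * m)) ^+ 2 + 1 ->
  (`|lucasV P (-1) (2 * m)| + (lucasU P (-1) (2 * m)) ^+ 2 + 1) ^+ 3 < n%:Z ->
  (exists k : nat,
      n%:Z = lucasU P (-1) (2 * k) * lucasU P (-1) (2 * k + 2 * m)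
      /\ zprime (lucasU P (-1) (2 * k)) /\ zprime (lucasU P (-1) (2 * k + 2 * m)))
  \/
  (exists k : nat,
      (k <= m)%N /\ m <> (2 * k)%N /\
      n%:Z = lucasU P (-1) (2 * k) * lucasU P (-1) (2 * m - 2 * k)
      /\ zprime (lucasU P (-1) (2 * k)) /\ zprime (lucasU P (-1) (2 * m - 2 * k))).
Proof.
move=> n0 heq hbig. left.
have [hP|hP] := lerP 0 P; first exact: core.
rewrite (V_neg P m) (even_neg P m) sqrrN in heq hbig.
have hP2 : 0 <= - P by rewrite oppr_ge0 ltW.
have [k [h1 [h2 h3]]] := core (-P) m n hP2 n0 heq hbig.
exists k.
have e : (2 * k + 2 * m = 2 * (k + m))%N by rewrite mulnDr.
rewrite e (even_neg P k) (even_neg P (k + m)) -e /zprime !abszN mulrNN. by split.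
Qed.
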